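(* Let $P$ be a simple product rule with parameters $\alpha,\beta,\gamma\in\mathbb Q$ (so $P\approx\alpha xy+\beta(x\dot y+\dot xy)+\gamma\dot x\dot y$ and $\alpha\gamma=\beta(\beta-1)$), and let $*$ be the $P$-product. Then there exists a series $\mathbb 1$ with $f*\mathbb 1=\mathbb 1*f=f$ for all series $f$ if and only if $(\beta,\gamma)\neq(0,0)$. Moreover, when $(\beta,\gamma)\neq(0,0)$ there is $\eta\in\mathbb Q$ such that the unique series $\mathbb 1$ with $\mathbb 1_\varepsilon=1$ and $\delta_a\mathbb 1=\eta\cdot\mathbb 1$ for all $a\in\Sigma$ is such a multiplicative identity.
   Context: Let $\Sigma$ be a finite alphabet, $\Sigma^*$ the set of finite words with empty word $\varepsilon$. A series is a function $f:\Sigma^*\to\mathbb Q$; write $f_w=f(w)$; series form a $\mathbb Q$-vector space under pointwise operations. For $a\in\Sigma$ the left derivative $\delta_af$ is the series $w\mapsto f(aw)$. Terms over variables $X$: generated by $u,v::=x\mid 0\mid c\cdot u\mid u+v\mid u*v$ ($c\in\mathbb Q$); $uv$ abbreviates $u*v$. A product rule is a term $P$ over $\{x,\dot x,y,\dot y\}$. The $P$-product $*$ of series and the semantics $[\![u]\!]_\varrho$ of terms under valuations $\varrho:X\to$ series are the unique pair with $(f*g)_\varepsilon=f_\varepsilon g_\varepsilon$, $\delta_a(f*g)=[\![P]\!]_{[x\mapsto f,\dot x\mapsto\delta_af,y\mapsto g,\dot y\mapsto\delta_ag]}$, and $[\![\cdot]\!]_\varrho$ interpreting variables by $\varrho$ and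 $0,c\cdot,+,*$ by the zero series, scalar multiplication, addition and $*$. $u\approx v$ means $u,v$ denote the same commutative polynomial. $P$ is simple if there are $\alpha,\beta,\gamma\in\mathbb Q$ with $\alpha\gamma=\beta(\beta-1)$ and $P\approx\alpha xy+\beta(x\dot y+\dot xy)+\gamma\dot x\dot y$. *)

(* Defs.v *)
From HB Require Import structures.
From mathcomp Require Import all_boot all_order all_algebra.
From mathcomp Require Import mpoly.
Set Implicit Arguments. Unset Strict Implicit. Unset Printing Implicit Defensive.
Import Order.TTheory GRing.Theory Num.Theory.
Local Open Scope ring_scope.

Definition series (Sigma : Type) := seq Sigma -> rat.

Definition delta (Sigma : Type) (a : Sigma) (f : series Sigma) : series Sigma :=
  fun w => f (a :: w).

Definition szero (Sigma : Type) : series Sigma := fun _ => 0.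
Definition sscale (Sigma : Type) (c : rat) (f : series Sigma) : series Sigma :=
  fun w => c * f w.
Definition sadd (Sigma : Type) (f g : series Sigma) : series Sigma :=
  fun w => f w + g w.

Inductive term (X : Type) : Type :=
| TVar of X
| TZero
| TScale of rat & term X
| TAdd of term X & term X
| TMul of term X & term X.
Arguments TZero {X}.

Fixpoint eval_term (Sigma X : Type) (m : series Sigma -> series Sigma -> series Sigma)
  (rho : X -> series Sigma) (u : term X) : series Sigma :=
  match u with
  | TVar x => rho x
  | TZero => @szero Sigma
  | TScale c u => sscale c (eval_term m rho u)
  | TAdd u v => sadd (eval_term m rho u) (eval_term m rho v)
  | TMul u v => m (eval_term m rho u) (eval_term m rho v)
  end.

Inductive pvar : Type := vx | vdx | vy | vdy.

Definition prule := term pvar.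

Definition pval (Sigma : Type) (f df g dg : series Sigma) (v : pvar) : series Sigma :=
  match v with vx => f | vdx => df | vy => g | vdy => dg end.

(* [prod_trunc P n f g] agrees with the P-product f*g on all words of length < n.
   It is defined by recursion on n, following the defining equations
   (f*g)_eps = f_eps g_eps and
   delta_a (f*g) = [[P]]_[x:=f, xdot:=delta_a f, y:=g, ydot:=delta_a g]. *)
Fixpoint prod_trunc (Sigma : Type) (P : prule) (n : nat) (f g : series Sigma) : series Sigma :=
  match n with
  | 0 => fun _ => f [::] * g [::]
  | n'.+1 => fun w =>
      match w with
      | [::] => f [::] * g [::]
      | a :: w' =>
          eval_term (prod_trunc P n') (pval f (delta a f) g (delta a g)) P w'
      end
  end.

Definition pprod (Sigma : Type) (P : prule) (f g : series Sigma) : series Sigma :=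
  fun w => prod_trunc P (size w).+1 f g w.

Definition pvar_idx (v : pvar) : 'I_4 :=
  match v with
  | vx => inord 0 | vdx => inord 1 | vy => inord 2 | vdy => inord 3
  end.

Fixpoint poly_of (u : prule) : {mpoly rat[4]} :=
  match u with
  | TVar v => 'X_(pvar_idx v)
  | TZero => 0
  | TScale c u => c *: poly_of u
  | TAdd u v => poly_of u + poly_of v
  | TMul u v => poly_of u * poly_of v
  end.

Definition approx (u v : prule) : Prop := poly_of u = poly_of v.

Definition simple_form (alpha beta gamma : rat) : prule :=
  TAdd (TAdd (TScale alpha (TMul (TVar vx) (TVar vy)))
             (TScale beta (TAdd (TMul (TVar vx) (TVar vdy)) (TMul (TVar vdx) (TVar vy)))))
       (TScale gamma (TMul (TVar vdx) (TVar vdy))).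

Definition simple_with (P : prule) (alpha beta gamma : rat) : Prop :=
  alpha * gamma = beta * (beta - 1) /\ approx P (simple_form alpha beta gamma).

Definition is_unit_for (Sigma : Type) (P : prule) (one : series Sigma) : Prop :=
  forall f : series Sigma, pprod P f one =1 f /\ pprod P one f =1 f.

(* Main.v *)
Require Import Defs.
From HB Require Import structures.
From mathcomp Require Import all_boot all_order all_algebra.
From mathcomp Require Import mpoly.
From mathcomp Require Import ring.
Set Implicit Arguments. Unset Strict Implicit. Unset Printing Implicit Defensive.
Import Order.TTheory GRing.Theory Num.Theory.
Local Open Scope ring_scope.

Definition dl (S : Type) (R : Type) (a : S) (f : seq S -> R) : seq S -> R :=
  fun w => f (a :: w).

Fixpoint fp (S : Type) (R : comNzRingType) (A B C : R) (w : seq S) (f g : seq S -> R) : R :=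
  match w with
  | [::] => f [::] * g [::]
  | a :: w' => A * fp A B C w' f g + B * (fp A B C w' f (dl a g) + fp A B C w' (dl a f) g)
               + C * fp A B C w' (dl a f) (dl a g)
  end.

Definition fpr (S : Type) (R : comNzRingType) (A B C : R) (f g : seq S -> R) : seq S -> R :=
  fun w => fp A B C w f g.

Lemma fp_ext (S : Type) (R : comNzRingType) (A B C : R) (w : seq S) f f' g g' :
  (forall v, (size v <= size w)%N -> f v = f' v) ->
  (forall v, (size v <= size w)%N -> g v = g' v) ->
  fp A B C w f g = fp A B C w f' g'.
Proof.
elim: w f f' g g' => [|a w IH] f f' g g' Hf Hg /=; first by rewrite Hf ?Hg.
have Hf' : forall v, (size v <= size w)%N -> dl a f v = dl a f' v.
  by move=> v Hv; rewrite /dl Hf.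
have Hg' : forall v, (size v <= size w)%N -> dl a g v = dl a g' v.
  by move=> v Hv; rewrite /dl Hg.
have Hf0 : forall v, (size v <= size w)%N -> f v = f' v.
  by move=> v Hv; rewrite Hf // (leq_trans Hv).
have Hg0 : forall v, (size v <= size w)%N -> g v = g' v.
  by move=> v Hv; rewrite Hg // (leq_trans Hv).
by rewrite (IH f f' g g') // (IH f f' (dl a g) (dl a g')) // (IH (dl a f) (dl a f') g g') //
  (IH (dl a f) (dl a f') (dl a g) (dl a g')).
Qed.

Lemma fp_morph (S : Type) (R T : comNzRingType) (phi : {rmorphism R -> T}) (A B C : R) (w : seq S) f g :
  phi (fp A B C w f g) = fp (phi A) (phi B) (phi C) w (fun v => phi (f v)) (fun v => phi (g v)).
Proof.
elim: w f g => [|a w IH] f g /=.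
  by rewrite rmorphM.
by rewrite !(rmorphD, rmorphM, IH).
Qed.

Fixpoint Tr (S : Type) (R : comNzRingType) (B C : R) (w : seq S) (f : seq S -> R) : R :=
  match w with
  | [::] => f [::]
  | a :: w' => Tr B C w' (fun v => C * f (a :: v) + B * f v)
  end.

Lemma Tr_ext (S : Type) (R : comNzRingType) (B C : R) (w : seq S) f f' :
  f =1 f' -> Tr B C w f = Tr B C w f'.
Proof.
elim: w f f' => [|a w IH] f f' H /=; first by rewrite H.
by apply: IH => v; rewrite !H.
Qed.

Lemma Tr_add (S : Type) (R : comNzRingType) (B C : R) (w : seq S) f g :
  Tr B C w (fun v => f v + g v) = Tr B C w f + Tr B C w g.
Proof.
elim: w f g => [|a w IH] f g //=.
rewrite -IH; apply: Tr_ext => v; ring.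
Qed.

Lemma Tr_scl (S : Type) (R : comNzRingType) (B C : R) (w : seq S) c f :
  Tr B C w (fun v => c * f v) = c * Tr B C w f.
Proof.
elim: w f => [|a w IH] f //=.
rewrite -IH; apply: Tr_ext => v; ring.
Qed.

Lemma Tr_mul (S : Type) (R : comNzRingType) (A B C : R) (HCA : C * A + B = B * B)
  (w : seq S) f g :
  Tr B C w (fpr A B C f g) = Tr B C w f * Tr B C w g.
Proof.
elim: w f g => [|a w IH] f g //=.
rewrite (@Tr_ext _ _ _ _ _ _ (fun v => (C * A + B) * fpr A B C f g v +
   ((C * B) * fpr A B C f (dl a g) v + (C * B) * fpr A B C (dl a f) g v) +
   (C * C) * fpr A B C (dl a f) (dl a g) v)); last first.
  by move=> v; rewrite /fpr /=; ring.
rewrite !Tr_add !Tr_scl !IH HCA /dl.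
ring.
Qed.

Lemma Tr_inj0 (S : Type) (R : idomainType) (B C : R) (HC : C != 0) (w : seq S) h :
  (forall v, Tr B C v h = 0) -> h w = 0.
Proof.
elim: w h => [|a w IH] h H; first exact: (H [::]).
have H1 := IH (fun v => C * h (a :: v) + B * h v) (fun v => H (a :: v)).
move: H1; rewrite /= (IH h H) mulr0 addr0 => /eqP; rewrite mulf_eq0 (negbTE HC) /=.
by move/eqP.
Qed.

Fixpoint evR (S : Type) (R : nzRingType) (s : rat -> R)
  (m : (seq S -> R) -> (seq S -> R) -> seq S -> R)
  (rho : pvar -> seq S -> R) (u : term pvar) : seq S -> R :=
  match u with
  | TVar x => rho x
  | TZero => fun _ => 0
  | TScale c u => fun w => s c * evR s m rho u w
  | TAdd u v => fun w => evR s m rho u w + evR s m rho v w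
  | TMul u v => m (evR s m rho u) (evR s m rho v)
  end.

Lemma eval_evR (S : Type) m rho (u : term pvar) :
  eval_term m rho u = evR (fun c : rat => c) m rho u :> (seq S -> rat).
Proof. by elim: u => //= [c u -> | u -> v -> | u -> v ->]. Qed.

Definition idx_pvar (i : 'I_4) : pvar :=
  match val i with 0 => vx | 1 => vdx | 2 => vy | _ => vdy end.

Lemma idx_pvarK v : idx_pvar (pvar_idx v) = v.
Proof. by case: v; rewrite /idx_pvar /= inordK. Qed.

Lemma Tr_zero (S : Type) (R : comNzRingType) (B C : R) (w : seq S) :
  Tr B C w (fun _ => 0) = 0.
Proof.
rewrite (@Tr_ext _ _ _ _ _ _ (fun v => 0 * (fun _ => 0) v)); last by move=> v; rewrite mul0r.
by rewrite Tr_scl mul0r.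
Qed.

Lemma Tr_poly (S : Type) (R : comNzRingType) (s : {rmorphism rat -> R}) (A B C : R)
  (HCA : C * A + B = B * B) rho (u : term pvar) (w : seq S) :
  Tr B C w (evR s (fpr A B C) rho u) =
  mmap s (fun i => Tr B C w (rho (idx_pvar i))) (poly_of u).
Proof.
elim: u => [x||c u IH|u IHu v IHv|u IHu v IHv] /=.
- by rewrite mmapX mmap1U idx_pvarK.
- by rewrite Tr_zero rmorph0.
- by rewrite Tr_scl IH mmapZ.
- by rewrite Tr_add IHu IHv rmorphD.
- by rewrite Tr_mul // IHu IHv rmorphM.
Qed.

Lemma evR_local (S : Type) (R : nzRingType) (s : rat -> R) m1 m2 rho (u : term pvar) (n : nat) :
  (forall f g (v : seq S), (size v <= n)%N -> m1 f g v = m2 f g v) ->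
  (forall f f' g g', (forall v, (size v <= n)%N -> f v = f' v) ->
     (forall v, (size v <= n)%N -> g v = g' v) ->
     forall v, (size v <= n)%N -> m2 f g v = m2 f' g' v) ->
  forall v, (size v <= n)%N -> evR s m1 rho u v = evR s m2 rho u v.
Proof.
move=> H12 H2; elim: u => [x||c u IH|u IHu v IHv|u IHu v IHv] w Hw //=.
- by rewrite IH.
- by rewrite IHu ?IHv.
- by rewrite H12 //; apply: H2.
Qed.

Lemma fpr_local (S : Type) (R : comNzRingType) (A B C : R) (n : nat) f f' g g' :
  (forall v : seq S, (size v <= n)%N -> f v = f' v) ->
  (forall v, (size v <= n)%N -> g v = g' v) ->
  forall v, (size v <= n)%N -> fpr A B C f g v = fpr A B C f' g' v.
Proof.
move=> Hf Hg v Hv; apply: fp_ext => v' Hv'.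
  by apply: Hf; exact: leq_trans Hv' Hv.
by apply: Hg; exact: leq_trans Hv' Hv.
Qed.

Lemma evR_morph (S : Type) (R T : comNzRingType) (phi : {rmorphism R -> T})
  (sR : rat -> R) (sT : rat -> T) (A B C : R) rhoR rhoT (u : term pvar) (w : seq S) :
  (forall c, phi (sR c) = sT c) ->
  (forall x v, phi (rhoR x v) = rhoT x v) ->
  phi (evR sR (fpr A B C) rhoR u w) = evR sT (fpr (phi A) (phi B) (phi C)) rhoT u w.
Proof.
move=> Hs Hr; elim: u w => [x||c u IH|u IHu t IHv|u IHu t IHv] w /=.
- by [].
- by rewrite rmorph0.
- by rewrite rmorphM Hs IH.
- by rewrite rmorphD IHu IHv.
- rewrite /fpr fp_morph; apply: fp_ext => v _; [exact: IHu | exact: IHv].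
Qed.

Lemma Tr_sub (S : Type) (R : comNzRingType) (B C : R) (w : seq S) f g :
  Tr B C w (fun v => f v - g v) = Tr B C w f - Tr B C w g.
Proof.
rewrite (@Tr_ext _ _ _ _ _ _ (fun v => f v + (-1) * g v)); last by move=> v; rewrite mulN1r.
by rewrite Tr_add Tr_scl mulN1r.
Qed.

Lemma respect_rat (S : Type) (alpha beta gamma : rat) :
  alpha * gamma = beta * (beta - 1) -> (beta, gamma) != (0, 0) ->
  forall u v : term pvar, poly_of u = poly_of v ->
  forall rho (w : seq S),
  evR (fun c => c) (fpr alpha beta gamma) rho u w = evR (fun c => c) (fpr alpha beta gamma) rho v w.
Proof.
move=> Hab Hbg u v Huv rho w.
have [A [B [C [HCA [HC [HA [HB HC0]]]]]]] : exists A B C : {poly rat},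
    C * A + B = B * B /\ C != 0 /\ A.[0] = alpha /\ B.[0] = beta /\ C.[0] = gamma.
  have [Hg|Hg] := eqVneq gamma 0.
    have Hb : beta = 1.
      move: Hab Hbg; rewrite Hg mulr0 => /esym /eqP; rewrite mulf_eq0 subr_eq0.
      case/orP => /eqP -> //; by rewrite eqxx.
    exists alpha%:P, (1 + alpha%:P * 'X), ('X * (1 + alpha%:P * 'X)).
    split; first by ring.
    split.
      rewrite mulf_neq0 ?polyX_eq0 //; apply/eqP => /(congr1 (horner^~ 0)).
      by rewrite !hornerE /= => /eqP; rewrite oner_eq0.
    by rewrite !hornerE Hg Hb /=; split.
  exists alpha%:P, beta%:P, gamma%:P.
  split; first by rewrite -!polyCM -polyCD mulrC Hab; congr (_%:P); ring.
  by rewrite polyC_eq0 Hg !hornerC.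
pose phi := horner_eval (0 : rat).
pose rho' := fun x v => (rho x v)%:P.
have E : forall t, evR (fun c => c) (fpr alpha beta gamma) rho t w =
     phi (evR polyC (fpr A B C) rho' t w).
  move=> t; rewrite -[alpha]HA -[beta]HB -[gamma]HC0; symmetry.
  apply: (@evR_morph _ _ _ phi polyC (fun c => c) A B C rho' rho).
  - by move=> c; exact: hornerC.
  - by move=> x v'; exact: hornerC.
rewrite !E; congr (phi _); apply/eqP; rewrite -subr_eq0; apply/eqP.
pose h := fun w' => evR polyC (fpr A B C) rho' u w' - evR polyC (fpr A B C) rho' v w'.
apply: (@Tr_inj0 _ _ B C HC w h) => v'.
by rewrite /h Tr_sub !(Tr_poly _ HCA) Huv subrr.
Qed.

Lemma fp_sclr (S : Type) (R : comNzRingType) (A B C : R) (w : seq S) f g c :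
  fp A B C w f (fun v => c * g v) = c * fp A B C w f g.
Proof.
elim: w f g => [|a w IH] f g /=; first by ring.
rewrite /dl /= !IH; ring.
Qed.

Lemma fp_scll (S : Type) (R : comNzRingType) (A B C : R) (w : seq S) f g c :
  fp A B C w (fun v => c * f v) g = c * fp A B C w f g.
Proof.
elim: w f g => [|a w IH] f g /=; first by ring.
rewrite /dl /= !IH; ring.
Qed.

Lemma fp_unit (S : Type) (alpha beta gamma eta : rat) (one : seq S -> rat) :
  alpha + beta * eta = 0 -> beta + gamma * eta = 1 ->
  one [::] = 1 -> (forall a, delta a one =1 sscale eta one) ->
  forall w f, fp alpha beta gamma w f one = f w /\ fp alpha beta gamma w one f = f w.
Proof.
move=> H1 H2 H0 Hd; elim=> [|a w IH] f /=; first by rewrite H0 mulr1 mul1r.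
have E : forall v, dl a one v = eta * one v by move=> v; exact: Hd.
rewrite (@fp_ext _ _ _ _ _ w f f (dl a one) (fun v => eta * one v)) //.
rewrite (@fp_ext _ _ _ _ _ w (dl a f) (dl a f) (dl a one) (fun v => eta * one v)) //.
rewrite (@fp_ext _ _ _ _ _ w (dl a one) (fun v => eta * one v) f f) //.
rewrite (@fp_ext _ _ _ _ _ w (dl a one) (fun v => eta * one v) (dl a f) (dl a f)) //.
rewrite !fp_sclr !fp_scll !(proj1 (IH _)) !(proj2 (IH _)) /dl.
split.
  transitivity ((alpha + beta * eta) * f w + (beta + gamma * eta) * f (a :: w)); first by ring.
  by rewrite H1 H2; ring.
transitivity ((alpha + beta * eta) * f w + (beta + gamma * eta) * f (a :: w)); first by ring.
by rewrite H1 H2; ring.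
Qed.

Lemma trunc_fp (S : Type) (P : prule) (alpha beta gamma : rat) :
  simple_with P alpha beta gamma -> (beta, gamma) != (0, 0) ->
  forall n (f g : series S) v, (size v < n)%N -> prod_trunc P n f g v = fp alpha beta gamma v f g.
Proof.
move=> [Hab Happ] Hbg; elim=> [|n IH] f g [|a w] //= Hw.
rewrite eval_evR.
rewrite (@evR_local _ _ _ _ (fpr alpha beta gamma) _ _ (size w)) //; last first.
- move=> f1 f1' g1 g1' Hf Hg v Hv; exact: fpr_local Hf Hg v Hv.
- move=> f1 g1 v Hv; rewrite IH //; exact: leq_ltn_trans Hv Hw.
by rewrite (respect_rat Hab Hbg Happ).
Qed.

Lemma pprod_fp (S : Type) (P : prule) (alpha beta gamma : rat) :
  simple_with P alpha beta gamma -> (beta, gamma) != (0, 0) ->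
  forall (f g : series S) v, pprod P f g v = fp alpha beta gamma v f g.
Proof. by move=> HP Hbg f g v; rewrite /pprod (trunc_fp HP Hbg). Qed.

Lemma eps_eval (S : Type) (P : prule) rho (u : prule) :
  eval_term (prod_trunc P 1) rho u ([::] : seq S) =
  meval (fun i => rho (idx_pvar i) [::]) (poly_of u).
Proof.
elim: u => [x||c u IH|u IHu t IHt|u IHu t IHt] /=.
- by rewrite mevalXU idx_pvarK.
- by rewrite meval0.
- by rewrite /sscale IH mevalZ.
- by rewrite /sadd IHu IHt mevalD.
- by rewrite IHu IHt mevalM.
Qed.

Lemma eta_exists (alpha beta gamma : rat) :
  alpha * gamma = beta * (beta - 1) -> (beta, gamma) != (0, 0) ->
  exists eta, alpha + beta * eta = 0 /\ beta + gamma * eta = 1.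
Proof.
move=> Hab Hbg; have [Hg|Hg] := eqVneq gamma 0.
  have Hb : beta = 1.
    move: Hab Hbg; rewrite Hg mulr0 => /esym /eqP; rewrite mulf_eq0 subr_eq0.
    case/orP => /eqP -> //; by rewrite eqxx.
  exists (- alpha); rewrite Hg Hb; split; ring.
exists ((1 - beta) / gamma); split.
  apply: (mulIf Hg); rewrite mul0r.
  transitivity (alpha * gamma + beta * (1 - beta)); first by field.
  rewrite Hab; ring.
by field.
Qed.

Theorem mainTheorem3 (Sigma : finType) (Sigma_ne : (0 < #|Sigma|)%N)
  (P : prule) (alpha beta gamma : rat) :
  simple_with P alpha beta gamma ->
  ((exists one : series Sigma, is_unit_for P one) <-> (beta, gamma) != (0, 0))
  /\
  ((beta, gamma) != (0, 0) ->
     exists eta : rat,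
       (exists one : series Sigma,
          one [::] = 1 /\ forall a : Sigma, delta a one =1 sscale eta one)
       /\
       (forall one : series Sigma,
          one [::] = 1 -> (forall a : Sigma, delta a one =1 sscale eta one) ->
          is_unit_for P one)).
Proof.
move=> HP.
have part2 : (beta, gamma) != (0, 0) ->
     exists eta : rat,
       (exists one : series Sigma,
          one [::] = 1 /\ forall a : Sigma, delta a one =1 sscale eta one)
       /\
       (forall one : series Sigma,
          one [::] = 1 -> (forall a : Sigma, delta a one =1 sscale eta one) ->
          is_unit_for P one).
  move=> Hbg; have [eta [H1 H2]] := eta_exists HP.1 Hbg.
  exists eta; split.
    exists (fun w => eta ^+ size w); split; first by rewrite expr0.
    by move=> a v; rewrite /delta /sscale /= exprS.
  move=> one H0 Hd f; split=> w; rewrite (pprod_fp HP Hbg).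
    exact: (proj1 (fp_unit H1 H2 H0 Hd w f)).
  exact: (proj2 (fp_unit H1 H2 H0 Hd w f)).
split=> //; split; last first.
  move=> Hbg; have [eta [[one [H0 Hd]] Hu]] := part2 Hbg.
  by exists one; exact: Hu.
move=> [one Hone]; apply/negP => /eqP Hbg.
case: Hbg => Hb Hg.
case/card_gt0P: Sigma_ne => a _.
pose f := fun w : seq Sigma => if w is [::] then 0 else 1 : rat.
have := (Hone f).1 [:: a].
rewrite /pprod /= eps_eval HP.2 /= !mevalD !mevalZ !mevalM !mevalXU /= Hb Hg.
rewrite (idx_pvarK vx) (idx_pvarK vdx) (idx_pvarK vy) (idx_pvarK vdy) /= !mul0r !addr0 mulr0 => /eqP; by rewrite eq_sym oner_eq0.
Qed.
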